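(* There is an absolute constant $C$ such that the following holds. Let $m\geq2$ be a divisor of $n$ and let $X_{n/m}$ be the set of unordered partitions of $\{1,\dots,n\}$ into $n/m$ cells each of size $m$, with the natural action of $S_n$. If $\pi\in S_n$ has $c$ cycles, then the number of elements of $X_{n/m}$ fixed by $\pi$ is at most $m^{Cn}c^{(1-1/m)c}$. *)

(* Defs.v *)
From Stdlib Require Import Reals.
From mathcomp Require Import all_boot all_fingroup.
Set Implicit Arguments.
Unset Strict Implicit.
Unset Printing Implicit Defensive.

Definition is_mpartition (n m : nat) (P : {set {set 'I_n}}) : bool :=
  partition P [set: 'I_n] && [forall B in P, #|B| == m].

Definition part_act (n : nat) (pi : 'S_n) (P : {set {set 'I_n}}) :
  {set {set 'I_n}} := [set pi @: (B : {set 'I_n}) | B in P].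

Definition nfixed_mpart (n m : nat) (pi : 'S_n) : nat :=
  #|[set P : {set {set 'I_n}} | is_mpartition m P && (part_act pi P == P)]|.

(* number of cycles of pi (fixed points count as cycles of length 1) *)
Definition ncycles (n : nat) (pi : 'S_n) : nat := #|porbits pi|.

(* Main.v *)
Require Import Defs.
From Stdlib Require Import Reals Lra.
From mathcomp Require Import all_boot all_fingroup zify.
Set Implicit Arguments.
Unset Strict Implicit.
Unset Printing Implicit Defensive.

Lemma ceil1 c m k : 0 < m -> c <= m * k -> (c + m.-1) %/ m <= k.
Proof. move=> h1 h2. rewrite -ltnS ltn_divLR // mulSn. lia. Qed.
Lemma ceil2 c m : 0 < m -> c <= (c + m.-1) %/ m * m.
Proof. move=> h1. have := divn_eq (c + m.-1) m. have := ltn_pmod (c + m.-1) h1.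
set q := (c + m.-1) %/ m. set r := (c + m.-1) %% m. lia. Qed.

Section Main.
Local Open Scope group_scope.
Variables (n m : nat) (pi : 'S_n).
Local Notation T := 'I_n.
Local Notation O := (porbits pi).

Lemma orbE o y : o \in O -> y \in o -> o = porbit pi y.
Proof.
case/imsetP=> z _ -> yz; apply/eqP; rewrite eq_porbit_mem porbit_sym //.
Qed.

Lemma orb_in y : porbit pi y \in O.
Proof. exact: imset_f. Qed.

Definition Lrec (I : {set {set T}}) (f : {ffun {set T} -> {set T}}) (o : {set T}) :=
  if o \in I then o else f o.

Definition Rec (x : {set T} * {set {set T}} * {ffun {set T} -> {set T}}) :
  {set {set T}} :=
  [set (s : 'S_n) @: [set y in x.1.1 | Lrec x.1.2 x.2 (porbit pi y) == i]
     | i in x.1.2, s in <[pi]>%g].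

Section P.
Variable P : {set {set T}}.

Definition Grp (o : {set T}) : {set {set T}} :=
  [set o' in O | [exists x in o, exists y in o', y \in pblock P x]].
Definition Ld (o : {set T}) := odflt set0 [pick o' in Grp o].
Definition Is := [set o in O | Ld o == o].
Definition fs : {ffun {set T} -> {set T}} :=
  [ffun o => if (o \in O) && (o \notin Is) then Ld o else set0].
Definition Bi (i : {set T}) := if [pick x in i] is Some x then pblock P x else set0.
Definition Ss := \bigcup_(i in Is) Bi i.
Definition phi := (Ss, Is, fs).

Hypothesis hpart : partition P [set: T].
Hypothesis hsz : forall B, B \in P -> #|B| = m.
Hypothesis hfix : forall B, B \in P -> pi @: B \in P.

Lemma triv : trivIset P.
Proof. by case/and3P: hpart. Qed.

Lemma blk_mem x : pblock P x \in P.
Proof. by apply: pblock_mem; case/and3P: hpart => /eqP -> _ _; rewrite inE. Qed.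

Lemma x_blk x : x \in pblock P x.
Proof. by rewrite mem_pblock; case/and3P: hpart => /eqP -> _ _; rewrite inE. Qed.

Lemma blk_eq B x : B \in P -> x \in B -> pblock P x = B.
Proof. exact: def_pblock triv. Qed.

Lemma fixX t B : B \in P -> (pi ^+ t) @: B \in P.
Proof.
elim: t B => [|t IH] B hB.
  by rewrite expg0 (eq_imset (g := id)) ?imset_id // => x; rewrite perm1.
rewrite expgS (eq_imset (g := (pi ^+ t) \o pi)); last by move=> x; rewrite permM.
by rewrite imset_comp; apply/IH/hfix.
Qed.

Lemma blkX t x : pblock P ((pi ^+ t) x) = (pi ^+ t) @: pblock P x.
Proof. by apply: blk_eq; [apply/fixX/blk_mem | apply/imset_f/x_blk]. Qed.

Lemma G1 o : o \in O -> o \in Grp o.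
Proof.
move=> hO; rewrite inE hO /=; case/imsetP: hO => z _ ->.
by apply/existsP; exists z; rewrite porbit_id; apply/existsP; exists z; rewrite porbit_id x_blk.
Qed.

Lemma G2 o x o' : o \in O -> x \in o -> o' \in O ->
  (o' \in Grp o) = [exists w in o', w \in pblock P x].
Proof.
move=> hO xo hO'; rewrite inE hO' /=; apply/existsP/existsP.
  case=> x' /andP[x'o /existsP[y /andP[yo' yb]]].
  have: x' \in porbit pi x by rewrite -(orbE hO xo).
  case/porbitP=> t ex'; move: yb; rewrite ex' blkX => /imsetP[w wb ey].
  exists w; rewrite wb andbT (orbE hO' yo') ey porbit_sym mem_porbit //.
case=> w /andP[wo' wb]; exists x; rewrite xo /=; apply/existsP; exists w.
by rewrite wo'.
Qed.

Lemma G3 o o' : o \in O -> o' \in Grp o -> Grp o' = Grp o.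
Proof.
move=> hO ho'; have hO' : o' \in O by move: ho'; rewrite inE => /andP[].
have [x xo] : exists x, x \in o by case/imsetP: hO => z _ ->; exists z; apply: porbit_id.
move: (ho'); rewrite (G2 hO xo hO') => /existsP[w /andP[wo' wb]].
have ebl : pblock P w = pblock P x by apply/blk_eq => //; apply: blk_mem.
apply/setP=> o''; apply/idP/idP => h.
  have hO'' : o'' \in O by move: h; rewrite inE => /andP[].
  by move: h; rewrite (G2 hO' wo' hO'') (G2 hO xo hO'') ebl.
have hO'' : o'' \in O by move: h; rewrite inE => /andP[].
by move: h; rewrite (G2 hO' wo' hO'') (G2 hO xo hO'') ebl.
Qed.

Lemma G4 o : o \in O -> Ld o \in Grp o.
Proof.
move=> hO; rewrite /Ld; case: pickP => [o' -> //| H].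
by have := H o; rewrite /= G1.
Qed.

Lemma G4' o : o \in O -> Ld o \in O.
Proof. by move/G4; rewrite inE => /andP[]. Qed.

Lemma G5 o : o \in O -> Ld (Ld o) = Ld o.
Proof. by move=> hO; rewrite {1}/Ld (G3 hO (G4 hO)). Qed.

Lemma G6 o : o \in O -> o \in Grp (Ld o).
Proof. by move=> hO; rewrite (G3 hO (G4 hO)) G1. Qed.

Lemma G7 i : i \in O -> #|Grp i| <= m.
Proof.
move=> hO; have [x xi] : exists x, x \in i by case/imsetP: hO => z _ ->; exists z; apply: porbit_id.
pose g o' := odflt x [pick w in o' :&: pblock P x].
have gP o' : o' \in Grp i -> g o' \in o' :&: pblock P x.
  move=> h; have hO' : o' \in O by move: h; rewrite inE => /andP[].
  move: h; rewrite (G2 hO xi hO') => /existsP[w hw].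
  rewrite /g; case: pickP => [w' -> //| H]; by have := H w; rewrite inE hw.
rewrite -(hsz (blk_mem x)) -(card_in_imset (f := g)).
  apply: subset_leq_card; apply/subsetP => _ /imsetP[o' h ->].
  by have := gP o' h; rewrite inE => /andP[].
move=> o1 o2 h1 h2 e.
have := gP o1 h1; have := gP o2 h2; rewrite !inE -e => /andP[a _] /andP[b _].
have hO1 : o1 \in O by move: h1; rewrite inE => /andP[].
have hO2 : o2 \in O by move: h2; rewrite inE => /andP[].
by rewrite (orbE hO1 b) (orbE hO2 a).
Qed.

Lemma Is_O i : i \in Is -> i \in O.
Proof. by rewrite inE => /andP[]. Qed.

Lemma Bi_def i : i \in O -> exists2 x, x \in i & Bi i = pblock P x.
Proof.
move=> hO; rewrite /Bi; case: pickP => [x xi|H]; first by exists x.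
by case/imsetP: hO H => z _ -> H; have := H z; rewrite /= porbit_id.
Qed.

Lemma K0 j y : j \in Is -> y \in Bi j -> Ld (porbit pi y) = j.
Proof.
move=> hj; have hO := Is_O hj; have [x xj ->] := Bi_def hO => yb.
have h : porbit pi y \in Grp j.
  by rewrite (G2 hO xj (orb_in y)); apply/existsP; exists y; rewrite porbit_id.
rewrite /Ld (G3 hO h); move: hj; rewrite inE => /andP[_ /eqP //].
Qed.

Lemma LrecE o : o \in O -> Lrec Is fs o = Ld o.
Proof.
move=> hO; rewrite /Lrec; case: ifP => h.
  by move: h; rewrite inE => /andP[_ /eqP].
by rewrite ffunE hO h.
Qed.

Lemma K1 i : i \in Is -> Bi i = [set y in Ss | Lrec Is fs (porbit pi y) == i].
Proof.
move=> hi; apply/setP => y; rewrite inE LrecE ?orb_in //; apply/idP/idP.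
  by move=> yb; rewrite (K0 hi yb) eqxx andbT; apply/bigcupP; exists i.
case/andP=> /bigcupP[j hj yb] /eqP e.
by rewrite -e (K0 hj yb).
Qed.

Lemma K2 : Rec phi = P.
Proof.
apply/setP => B; apply/idP/idP.
  case/imset2P => i s hi /cycleP[t ->] ->.
  rewrite -(K1 hi); have [x _ ->] := Bi_def (Is_O hi); apply/fixX/blk_mem.
move=> hB.
have [y yB] : exists y, y \in B.
  apply/set0Pn; apply: contraTneq hB => ->.
  by case/and3P: hpart.
have hO := orb_in y.
set o := porbit pi y in hO.
have hi : Ld o \in Is by rewrite inE (G4' hO) (G5 hO) eqxx.
have [x xi ebi] := Bi_def (Is_O hi).
move: (G6 hO); rewrite (G2 (G4' hO) xi hO) => /existsP[w /andP[wo wb]].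
have : y \in porbit pi w by rewrite -(orbE hO wo) /o porbit_id.
case/porbitP=> t ey.
have -> : B = (pi ^+ t) @: [set y in Ss | Lrec Is fs (porbit pi y) == Ld o].
  rewrite -(K1 hi) ebi -(blk_eq (blk_mem x) wb) -blkX -ey.
  by rewrite (blk_eq hB yB).
by apply: imset2_f; rewrite ?mem_cycle.
Qed.

Lemma fsP : fs \in pffun_on set0 (O :\: Is) Is.
Proof.
apply/pffun_onP; split.
  apply/supportP => o; rewrite inE ffunE => h; case: ifP => // /andP[h1 h2].
  by move: h; rewrite h1 h2.
move=> _ /imageP[o ho ->]; move: ho; rewrite inE => /andP[h1 h2].
by rewrite ffunE h1 h2 /= inE (G4' h2) (G5 h2) eqxx.
Qed.

Lemma Is_sub : Is \subset O.
Proof. by apply/subsetP => i /Is_O. Qed.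

Lemma Cnt : (#|O| <= m * #|Is|)%N.
Proof.
rewrite -sum1_card (partition_big Ld (mem Is)); last first.
  by move=> o hO; rewrite /= inE (G4' hO) (G5 hO) eqxx.
rewrite mulnC -sum_nat_const; apply: leq_sum => i hi.
rewrite sum1dep_card (leq_trans _ (G7 (Is_O hi))) //.
apply: subset_leq_card; apply/subsetP => o; rewrite inE => /andP[hO /eqP <-].
exact: G6.
Qed.

End P.

Definition Fset := [set P : {set {set T}} | is_mpartition m P && (part_act pi P == P)].
Definition Cod := [set x : {set T} * {set {set T}} * {ffun {set T} -> {set T}} |
  [&& x.1.2 \subset O, (#|O| <= m * #|x.1.2|)%N & x.2 \in pffun_on set0 (O :\: x.1.2) x.1.2]].

Lemma Fhyps P : P \in Fset ->
  [/\ partition P [set: T], forall B, B \in P -> #|B| = m & forall B, B \in P -> pi @: B \in P].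
Proof.
rewrite inE => /andP[/andP[hp /forallP hs] /eqP hf]; split => //.
  by move=> B hB; have := hs B; rewrite hB => /eqP.
by move=> B hB; rewrite -hf; apply: imset_f.
Qed.


Lemma card_F : (#|Fset| <= #|Cod|)%N.
Proof.
rewrite -(card_in_imset (f := phi)).
  apply: subset_leq_card; apply/subsetP => _ /imsetP[P hP ->].
  have [h1 h2 h3] := Fhyps hP.
  by rewrite inE /= Is_sub (Cnt h1 h2 h3) fsP.
move=> P1 P2 h1 h2 e.
have [a1 a2 a3] := Fhyps h1; have [b1 b2 b3] := Fhyps h2.
by rewrite -(K2 a1 a3) -(K2 b1 b3) e.
Qed.

Lemma card_Cod : #|Cod| = (2 ^ n * \sum_(I : {set {set T}} | (I \subset O) && (#|O| <= m * #|I|)%N) #|I| ^ #|O :\: I|)%N.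
Proof.
rewrite -sum1_card.
rewrite (eq_bigl (fun x : {set T} * {set {set T}} * {ffun {set T} -> {set T}} => (xpredT x.1.1 && ((x.1.2 \subset O) && (#|O| <= m * #|x.1.2|)%N)) && (x.2 \in pffun_on set0 (O :\: x.1.2) x.1.2))); last first.
  by move=> x; rewrite inE andbA.
rewrite -(pair_big_dep (fun p : {set T} * {set {set T}} => xpredT p.1 && ((p.2 \subset O) && (#|O| <= m * #|p.2|)%N)) (fun p (f : {ffun {set T} -> {set T}}) => f \in pffun_on set0 (O :\: p.2) p.2) (fun _ _ => 1%N)).
rewrite (eq_bigr (fun p : {set T} * {set {set T}} => #|p.2| ^ #|O :\: p.2|)%N); last first.
  by move=> p _; rewrite sum1_card card_pffun_on.
rewrite -(pair_big_dep (xpredT : pred {set T}) (fun _ (I : {set {set T}}) => (I \subset O) && (#|O| <= m * #|I|)%N) (fun _ (I : {set {set T}}) => #|I| ^ #|O :\: I|)%N).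
rewrite (eq_bigl (fun S : {set T} => S \in [set: {set T}])); last by move=> S; rewrite in_setT.
by rewrite sum_nat_const -powersetT card_powerset cardsT card_ord.
Qed.

Lemma sum_bound : (0 < m)%N ->
  (\sum_(I : {set {set T}} | (I \subset O) && (#|O| <= m * #|I|)%N) #|I| ^ #|O :\: I|
   <= 2 ^ #|O| * #|O| ^ (#|O| - (#|O| + m.-1) %/ m))%N.
Proof.
move=> hm; set c := #|O|.
apply: (@leq_trans (\sum_(I : {set {set T}} | (I \subset O) && (c <= m * #|I|)%N) c ^ (c - (c + m.-1) %/ m))%N).
  apply: leq_sum => I /andP[hI hc].
  have eD : #|O :\: I| = (c - #|I|)%N by rewrite cardsD (setIidPr hI).
  have hIc : (#|I| <= c)%N by apply: subset_leq_card.
  rewrite eD; case: (posnP c) => [c0|cpos].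
    by rewrite c0 !sub0n !expn0.
  apply: (@leq_trans (c ^ (c - #|I|))%N).
    case: (posnP (c - #|I|)%N) => [->|hp]; first by rewrite !expn0.
    by rewrite leq_exp2r.
  apply: leq_pexp2l => //.
  have := ceil1 hm hc; lia.
rewrite (eq_bigl (fun I => I \in [set I : {set {set T}} | (I \subset O) && (#|O| <= m * #|I|)%N])); last by move=> I; rewrite inE.
rewrite sum_nat_const leq_mul2r; apply/orP; right.
rewrite -card_powerset; apply: subset_leq_card; apply/subsetP => I.
by rewrite !inE => /andP[].
Qed.

End Main.

Local Open Scope R_scope.

Lemma INR_expn a b : INR (a ^ b)%N = pow (INR a) b.
Proof.
elim: b => [|b IH]; first by rewrite expn0.
by rewrite expnS -multE mult_INR IH.
Qed.

Lemma ln0 : ln 0 = 0.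
Proof. rewrite /ln; case: Rlt_dec => // h; exfalso; exact: (Rlt_irrefl _ h). Qed.


Lemma nat_bound n m (pi : 'S_n) : (2 <= m)%N ->
  (nfixed_mpart m pi <= 2 ^ n * 2 ^ ncycles pi *
     ncycles pi ^ (ncycles pi - (ncycles pi + m.-1) %/ m))%N.
Proof.
move=> hm.
have -> : nfixed_mpart m pi = #|Fset m pi| by [].
rewrite (leq_trans (card_F m pi)) // card_Cod -mulnA leq_mul2l; apply/orP; right.
by apply: sum_bound; lia.
Qed.

Lemma c_le_n n (pi : 'S_n) : (ncycles pi <= n)%N.
Proof.
by rewrite /ncycles /porbits (leq_trans (leq_imset_card _ _)) // card_ord.
Qed.

Theorem lemma4p4 :
  exists C : R, forall (n m : nat) (pi : 'S_n),
    (2 <= m)%N -> (m %| n)%N ->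
    Rle (INR (nfixed_mpart m pi))
        (Rmult (Rpower (INR m) (Rmult C (INR n)))
               (Rpower (INR (ncycles pi))
                       (Rmult (Rminus 1 (Rdiv 1 (INR m))) (INR (ncycles pi))))).
Proof.
exists 2 => n m pi hm _.
set c := ncycles pi.
set q := ((c + m.-1) %/ m)%N.
have hcn : (c <= n)%N by apply: c_le_n.
have hN := nat_bound pi hm; rewrite -/c -/q in hN.
have mpos : (0 < INR m) by apply: lt_0_INR; apply/ltP; lia.
have m2 : (2 <= INR m) by apply: (le_INR 2); apply/leP.
apply: Rle_trans; first by apply: le_INR; apply/leP; exact: hN.
rewrite -!multE !mult_INR.
apply: Rmult_le_compat.
- by apply: Rmult_le_pos; apply: pos_INR.
- by apply: pos_INR.
- have h1 : (2 ^ n * 2 ^ c <= m ^ (2 * n))%N.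
    rewrite -expnD (@leq_trans (2 ^ (2 * n))) //.
      by apply: leq_pexp2l => //; lia.
    case: (posnP (2 * n)%N) => [->|hp]; first by rewrite !expn0.
    by rewrite leq_exp2r.
  apply: (Rle_trans _ (INR (m ^ (2 * n)))).
    by rewrite -mult_INR multE; apply: le_INR; apply/leP; exact: h1.
  rewrite INR_expn -Rpower_pow //.
  have -> : INR (2 * n)%N = 2 * INR n by rewrite -multE mult_INR.
  exact: Rle_refl.
- case: (posnP c) => [c0|cpos].
    rewrite c0 /Rpower /= ln0 Rmult_0_r exp_0.
    exact: Rle_refl.
  have hq : (q <= c)%N.
    by apply: ceil1; [lia | rewrite leq_pmull; lia].
  have hq2 : (c <= q * m)%N by apply: ceil2; lia.
  have hcr : (1 <= INR c) by apply: (le_INR 1); apply/leP.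
  rewrite INR_expn -Rpower_pow; last lra.
  apply: Rle_Rpower => //.
  rewrite -minusE minus_INR; last by apply/leP.
  have hq2r := le_INR _ _ (elimT leP hq2); rewrite -multE mult_INR in hq2r.
  have hu : (INR m * / INR m = 1) by field; lra.
  have hup : (0 < / INR m) by apply: Rinv_0_lt_compat.
  have : (INR c * / INR m <= INR q).
    have := Rmult_le_compat_r (/ INR m) _ _ (Rlt_le _ _ hup) hq2r.
    by rewrite Rmult_assoc hu Rmult_1_r.
  rewrite /Rdiv /Rminus; nra.
Qed.
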